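(* For all nonnegative integers $k,l$, \[ \sum_{n=0}^\infty\frac{Q_l(H_{n+1},H_{n+1}^{(2)},\dots,H_{n+1}^{(l)})\,P_k(H_n,H_n^{(2)},\dots,H_n^{(k)})}{(n+1)^2}=\binom{l+k+1}{l}\zeta(l+k+2). \]
   Context: For integers $r\ge1$ and $n\ge0$, $H_n^{(r)}=\sum_{j=1}^n j^{-r}$ (so $H_0^{(r)}=0$) and $H_n=H_n^{(1)}$. $P_0=Q_0=1$ and for $n\ge1$, $P_n(y_1,\dots,y_n)=\sum_{m_1+2m_2+\cdots=n}\frac{(-1)^{m_2+m_4+\cdots}}{m_1!m_2!\cdots}\prod_{i\ge1}(y_i/i)^{m_i}$, $Q_n(y_1,\dots,y_n)=\sum_{m_1+2m_2+\cdots=n}\frac{1}{m_1!m_2!\cdots}\prod_{i\ge1}(y_i/i)^{m_i}$. $\zeta$ is the Riemann zeta function. *)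

(* Defs.v *)
From Stdlib Require Import Reals List Arith ClassicalEpsilon.
Open Scope R_scope.

Fixpoint H (r n : nat) : R :=
  match n with
  | O => 0
  | S m => H r m + / (INR (S m)) ^ r
  end.

Fixpoint tuples (len bound : nat) : list (list nat) :=
  match len with
  | O => nil :: nil
  | S l => flat_map (fun a => map (cons a) (tuples l bound)) (seq 0 (S bound))
  end.

(* For m = [m_1; m_2; ...; m_len] (list position j holds m_{j+1}),
   weight_from i m = sum_j (i+j) * m_{...}. *)
Fixpoint weight_from (i : nat) (m : list nat) : nat :=
  match m with
  | nil => O
  | a :: t => (i * a + weight_from (S i) t)%nat
  end.

Fixpoint even_count_from (i : nat) (m : list nat) : nat :=
  match m with
  | nil => O
  | a :: t => ((if Nat.even i then a else O) + even_count_from (S i) t)%nat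
  end.

Fixpoint mono_from (y : nat -> R) (i : nat) (m : list nat) : R :=
  match m with
  | nil => 1
  | a :: t => (y i / INR i) ^ a / INR (fact a) * mono_from y (S i) t
  end.

Definition sumR (l : list R) : R := fold_right Rplus 0 l.

(* Tuples (m_1,...,m_n) of nonnegative integers with m_1 + 2 m_2 + ... + n m_n = n
   (necessarily m_i <= n). *)
Definition partitions_of (n : nat) : list (list nat) :=
  filter (fun m => Nat.eqb (weight_from 1 m) n) (tuples n n).

Definition P (n : nat) (y : nat -> R) : R :=
  sumR (map (fun m => (-1) ^ (even_count_from 1 m) * mono_from y 1 m)
            (partitions_of n)).

Definition Q (n : nat) (y : nat -> R) : R :=
  sumR (map (fun m => mono_from y 1 m) (partitions_of n)).

(* Riemann zeta value: the sum of the series sum_{j>=1} 1/j^s (chosen by epsilon;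
   it is the actual sum whenever the series converges, e.g. for s >= 2). *)
Definition zeta (s : nat) : R :=
  epsilon (inhabits 0) (fun z => infinite_sum (fun j => / (INR (S j)) ^ s) z).

(* Main.v *)
Require Import Defs.
From Stdlib Require Import Reals List Lra Lia Arith ClassicalEpsilon.
Open Scope R_scope.

Fixpoint sm (n : nat) (f : nat -> R) : R :=
  match n with O => 0 | S p => sm p f + f p end.

Lemma sm_ext n f g : (forall i, (i < n)%nat -> f i = g i) -> sm n f = sm n g.
Proof. induction n; simpl; intros H0; auto. rewrite IHn by (intros; apply H0; lia). rewrite H0 by lia. auto. Qed.

Lemma sm_plus n f g : sm n (fun i => f i + g i) = sm n f + sm n g.
Proof. induction n; simpl; [lra|]. rewrite IHn; lra. Qed.

Lemma sm_minus n f g : sm n (fun i => f i - g i) = sm n f - sm n g.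
Proof. induction n; simpl; [lra|]. rewrite IHn; lra. Qed.

Lemma sm_scal n c f : sm n (fun i => c * f i) = c * sm n f.
Proof. induction n; simpl; [lra|]. rewrite IHn; lra. Qed.

Lemma sm_zero n f : (forall i, (i < n)%nat -> f i = 0) -> sm n f = 0.
Proof. induction n; simpl; intros H0; auto. rewrite IHn by (intros; apply H0; lia). rewrite H0 by lia. lra. Qed.

Lemma sm_front n f : sm (S n) f = f O + sm n (fun i => f (S i)).
Proof. induction n; simpl in *; [lra|]. rewrite IHn. lra. Qed.

Lemma sm_swap n m (f : nat -> nat -> R) :
  sm n (fun i => sm m (fun j => f i j)) = sm m (fun j => sm n (fun i => f i j)).
Proof.
  induction n; simpl.
  - symmetry; apply sm_zero; auto.
  - rewrite IHn. rewrite <- sm_plus. auto.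
Qed.

Lemma sm_nonneg n f : (forall i, (i < n)%nat -> 0 <= f i) -> 0 <= sm n f.
Proof. induction n; simpl; intros H0; [lra|]. assert (0 <= sm n f) by (apply IHn; intros; apply H0; lia). specialize (H0 n ltac:(lia)). lra. Qed.
Lemma sm_le n f g : (forall i, (i < n)%nat -> f i <= g i) -> sm n f <= sm n g.
Proof. induction n; simpl; intros H0; [lra|]. pose proof (H0 n ltac:(lia)) as Hn. assert (sm n f <= sm n g) by (apply IHn; intros; apply H0; lia). lra. Qed.

Lemma sm_split m K f : sm (m + K) f = sm m f + sm K (fun j => f (m + j)%nat).
Proof. induction K; simpl. rewrite Nat.add_0_r; lra. rewrite Nat.add_succ_r. simpl. rewrite IHK. lra. Qed.

Lemma sm_trunc m N f : (m <= N)%nat -> (forall i, (m <= i)%nat -> f i = 0) -> sm N f = sm m f.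
Proof. intros HmN H0. replace N with (m + (N - m))%nat by lia. rewrite sm_split.
  rewrite (sm_zero (N - m)); [lra|]. intros; apply H0; lia. Qed.

Lemma sm_tele K f : sm K (fun i => f i - f (S i)) = f O - f K.
Proof. induction K; simpl; [lra|]. rewrite IHK; lra. Qed.

Lemma sm_growing f : (forall i, 0 <= f i) -> Un_growing (fun K => sm (S K) f).
Proof. intros H0 K. simpl. specialize (H0 (S K)). simpl in *. lra. Qed.

Lemma sumR_app l1 l2 : sumR (l1 ++ l2) = sumR l1 + sumR l2.
Proof. induction l1; simpl; [lra|]. unfold sumR in *; simpl. rewrite IHl1; lra. Qed.

Lemma sumR_seq n g : sumR (map g (seq 0 n)) = sm n g.
Proof. induction n; [reflexivity|]. rewrite seq_S, map_app, sumR_app, IHn. simpl. unfold sumR; simpl. lra. Qed.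

Definition F (y : nat -> R) (L b i n : nat) : R :=
  sumR (map (mono_from y i) (filter (fun m => Nat.eqb (weight_from i m) n) (tuples L b))).

Definition cf (y : nat -> R) (i a : nat) : R := (y i / INR i) ^ a / INR (fact a).

Lemma sumR_cons x l : sumR (x :: l) = x + sumR l.
Proof. reflexivity. Qed.
Lemma sumR_nil : sumR nil = 0.
Proof. reflexivity. Qed.

Lemma F_0 y b i n : F y 0 b i n = if Nat.eqb n 0 then 1 else 0.
Proof. unfold F. simpl. destruct n; simpl; rewrite ?sumR_cons, ?sumR_nil; lra. Qed.

Lemma filter_cons_map y i n a T :
  sumR (map (mono_from y i) (filter (fun m => Nat.eqb (weight_from i m) n) (map (cons a) T)))
  = if Nat.leb (i*a) n then cf y i a * sumR (map (mono_from y (S i)) (filter (fun t => Nat.eqb (weight_from (S i) t) (n - i*a)) T)) else 0.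
Proof.
  induction T as [|t T IH]; simpl.
  - destruct (Nat.leb (i*a) n); simpl; rewrite ?sumR_nil; lra.
  - destruct (Nat.leb_spec (i*a) n) as [Hle|Hgt].
    + destruct (Nat.eqb_spec (i * a + weight_from (S i) t) n), (Nat.eqb_spec (weight_from (S i) t) (n - i*a)); try lia.
      * simpl. unfold sumR in *. simpl. rewrite IH. unfold cf. lra.
      * exact IH.
    + destruct (Nat.eqb_spec (i * a + weight_from (S i) t) n); try lia. exact IH.
Qed.

Lemma sumR_flat y i n (g : nat -> list (list nat)) (as_ : list nat) :
  sumR (map (mono_from y i) (filter (fun m => Nat.eqb (weight_from i m) n) (flat_map g as_)))
  = sumR (map (fun a => sumR (map (mono_from y i) (filter (fun m => Nat.eqb (weight_from i m) n) (g a)))) as_).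
Proof.
  induction as_ as [|a as_ IH]; simpl; auto.
  rewrite filter_app, map_app, sumR_app, IH. reflexivity.
Qed.

Lemma F_S y L b i n : F y (S L) b i n =
  sm (S b) (fun a => if Nat.leb (i*a) n then cf y i a * F y L b (S i) (n - i*a) else 0).
Proof.
  unfold F. cbn [tuples]. rewrite (sumR_flat y i n). rewrite <- sumR_seq.
  f_equal. apply map_ext. intros a. rewrite filter_cons_map. auto.
Qed.

Lemma cf_step y i a : i <> O -> cf y i (S a) * INR (i * S a) = y i * cf y i a.
Proof.
  intros Hi. unfold cf. rewrite mult_INR. change (fact (S a)) with (S a * fact a)%nat.
  rewrite mult_INR. simpl pow.
  assert (INR i <> 0) by (apply not_0_INR; auto).
  assert (INR (fact a) <> 0) by apply INR_fact_neq_0.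
  assert (INR (S a) <> 0) by (apply not_0_INR; lia).
  field; auto.
Qed.

Lemma cf_0 y i : cf y i 0 = 1.
Proof. unfold cf. simpl. lra. Qed.

Lemma newton_F y L : forall i n b, (1 <= i)%nat -> (n <= b)%nat ->
  INR n * F y L b i n = sm L (fun t => if Nat.leb (i+t) n then y (i+t)%nat * F y L b i (n - (i+t)) else 0).
Proof.
  induction L as [|L IH]; intros i n b Hi Hb.
  - rewrite F_0. simpl. destruct n; simpl; lra.
  - rewrite F_S. rewrite <- sm_scal.
    set (part1 := fun a => if Nat.leb (i*a) n then cf y i a * INR (i*a) * F y L b (S i) (n - i*a) else 0).
    set (h := fun a t => if Nat.leb (i*a) n then (if Nat.leb (S i + t) (n - i*a) then cf y i a * (y (S i + t)%nat * F y L b (S i) (n - i*a - (S i + t))) else 0) else 0).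
    rewrite (sm_ext _ _ (fun a => part1 a + sm L (fun t => h a t))).
    2:{ intros a Ha. unfold part1, h. destruct (Nat.leb_spec (i*a) n).
        - idtac.
          assert (E: INR n = INR (i*a) + INR (n - i*a)) by (rewrite <- plus_INR; f_equal; lia).
          rewrite E.
          assert (IH' := IH (S i) (n - i*a)%nat b ltac:(lia) ltac:(lia)).
          transitivity (cf y i a * INR (i * a) * F y L b (S i) (n - i * a)%nat + cf y i a * (INR (n - i*a) * F y L b (S i) (n - i * a)%nat)); [ring|].
          rewrite IH'. rewrite <- sm_scal. f_equal. apply sm_ext. intros t Ht.
          replace (S i + t)%nat with (i + S t)%nat by lia.
          destruct (Nat.leb (i + S t) (n - i*a)); ring.
        - rewrite sm_zero; [ring|]. auto. }
    rewrite sm_plus, sm_swap. rewrite (sm_front L).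
    f_equal.
    +
      rewrite sm_front. unfold part1 at 1. rewrite Nat.mul_0_r. simpl (INR 0).
      replace (i + 0)%nat with i by lia.
      destruct (Nat.leb_spec i n) as [Hin|Hin].
      * rewrite F_S. simpl (sm (S b) _).
        destruct (Nat.leb_spec (i*b) (n - i)) as [Hx|Hx]; [nia|].
        rewrite Rplus_0_r.
        assert (Z: (if Nat.leb 0 n then cf y i 0 * 0 * F y L b (S i) (n - 0)%nat else 0) = 0)
          by (destruct (Nat.leb 0 n); ring).
        rewrite Z, Rplus_0_l. rewrite <- sm_scal.
        apply sm_ext; intros a Ha; unfold part1; rewrite Nat.mul_succ_r;
        destruct (Nat.leb_spec (i*a+i) n), (Nat.leb_spec (i*a) (n-i)); try lia; try ring.
        rewrite <- Nat.mul_succ_r. rewrite cf_step by lia.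
        replace (n - i * S a)%nat with (n - i - i*a)%nat by (rewrite Nat.mul_succ_r; lia); ring.
      * rewrite sm_zero. { destruct (Nat.leb 0 n); ring. }
        intros a Ha. unfold part1. destruct (Nat.leb_spec (i * S a) n); auto. nia.
    + apply sm_ext. intros t Ht. unfold h.
      replace (i + S t)%nat with (S i + t)%nat by lia.
      destruct (Nat.leb_spec (S i + t) n) as [Hc|Hc].
      * rewrite F_S. rewrite <- sm_scal. apply sm_ext. intros a Ha.
        destruct (Nat.leb_spec (i*a) n), (Nat.leb_spec (S i + t) (n - i*a)), (Nat.leb_spec (i*a) (n - (S i + t))); try lia; try ring.
        replace (n - i * a - (S i + t))%nat with (n - (S i + t) - i*a)%nat by lia. ring.
      * apply sm_zero. intros a Ha.
        destruct (Nat.leb_spec (i*a) n), (Nat.leb_spec (S i + t) (n - i*a)); try lia; auto.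
Qed.

Lemma F_len y L : forall i n b, (1 <= i)%nat -> (n < i + L)%nat -> F y (S L) b i n = F y L b i n.
Proof.
  induction L as [|L IH]; intros i n b Hi Hn.
  - rewrite F_S, F_0. rewrite sm_front. rewrite sm_zero.
    + rewrite Nat.mul_0_r, Nat.sub_0_r, cf_0, F_0. simpl. destruct n; simpl; ring.
    + intros a Ha. destruct (Nat.leb_spec (i * S a) n); auto. nia.
  - rewrite F_S, (F_S y L). apply sm_ext. intros a Ha.
    destruct (Nat.leb_spec (i*a) n); auto. rewrite IH; auto; lia.
Qed.

Lemma F_bound y L : forall i n b b', (1 <= i)%nat -> (n <= b)%nat -> (n <= b')%nat -> F y L b i n = F y L b' i n.
Proof.
  induction L as [|L IH]; intros i n b b' Hi Hb Hb'.
  - rewrite !F_0; auto.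
  - rewrite !F_S. rewrite (sm_trunc (S n) (S b)), (sm_trunc (S n) (S b')); try lia.
    + apply sm_ext. intros a Ha. destruct (Nat.leb_spec (i*a) n); auto.
      rewrite (IH (S i) (n - i*a)%nat b b'); auto; lia.
    + intros a Ha. destruct (Nat.leb_spec (i*a) n); auto. nia.
    + intros a Ha. destruct (Nat.leb_spec (i*a) n); auto. nia.
Qed.

Lemma F_Q y L b n : (n <= L)%nat -> (n <= b)%nat -> F y L b 1 n = Q n y.
Proof.
  intros HL Hb. rewrite (F_bound y L 1 n b n); auto.
  replace L with (n + (L - n))%nat by lia. generalize (L - n)%nat as d. induction d.
  - rewrite Nat.add_0_r. reflexivity.
  - rewrite Nat.add_succ_r, F_len by lia. exact IHd.
Qed.

Lemma newton_Q n y : INR n * Q n y = sm n (fun t => y (S t) * Q (n - S t)%nat y).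
Proof.
  rewrite <- (F_Q y n n n) by lia. rewrite newton_F by lia.
  apply sm_ext. intros t Ht. destruct (Nat.leb_spec (1+t) n); [|lia].
  rewrite F_Q by lia. f_equal.
Qed.

Lemma mono_sign y m : forall i, (-1)^(even_count_from i m) * mono_from y i m = mono_from (fun j => (-1)^(S j) * y j) i m.
Proof.
  induction m as [|a m IH]; intros i; simpl.
  - ring.
  - rewrite pow_add. rewrite <- IH.
    assert (E1: ((-1)^(S i))^a = (-1)^(if Nat.even i then a else O)).
    { destruct (Nat.even i) eqn:Ei.
      - apply Nat.even_spec in Ei. destruct Ei as [p ->]. rewrite pow_1_odd. reflexivity.
      - assert (Ho: Nat.odd i = true) by (unfold Nat.odd; rewrite Ei; auto).
        apply Nat.odd_spec in Ho. destruct Ho as [p ->].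
        replace (S (2*p+1)) with (2 * (S p))%nat by lia. rewrite pow_1_even. rewrite pow1. simpl. reflexivity. }
    assert (E: ((-1)^(S i) * y i / INR i)^a = (-1)^(if Nat.even i then a else O) * (y i / INR i)^a).
    { unfold Rdiv. rewrite !Rpow_mult_distr, E1. ring. }
    replace (-1 * (-1) ^ i * y i / INR i) with ((-1)^(S i) * y i / INR i) by (simpl; ring).
    rewrite E. set (u := (-1) ^ (if Nat.even i then a else 0%nat)). set (v := (-1) ^ even_count_from (S i) m). set (w := (y i / INR i) ^ a). clearbody u v w. unfold Rdiv. ring.
Qed.

Lemma P_Q n y : P n y = Q n (fun j => (-1)^(S j) * y j).
Proof. unfold P, Q. f_equal. apply map_ext. intros m. apply mono_sign. Qed.

Lemma newton_P n y : INR n * P n y = sm n (fun t => (-1)^t * y (S t) * P (n - S t)%nat y).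
Proof.
  rewrite !P_Q, newton_Q. apply sm_ext. intros t Ht. rewrite P_Q. simpl pow. ring.
Qed.

Lemma Q_0 y : Q 0 y = 1.
Proof. unfold Q. simpl. unfold sumR. simpl. ring. Qed.
Lemma P_0 y : P 0 y = 1.
Proof. rewrite P_Q. apply Q_0. Qed.

Definition yH (N : nat) : nat -> R := fun i => H i N.

Lemma H_S i N : H i (S N) = H i N + (/ INR (S N)) ^ i.
Proof. simpl. rewrite pow_inv. reflexivity. Qed.

Lemma sm_opp n f : sm n (fun i => - f i) = - sm n f.
Proof. induction n; simpl; [ring|]. rewrite IHn; ring. Qed.

Definition prv (T : nat -> R) (j : nat) : R := match j with O => 0 | S j' => T j' end.

Lemma prv_sm p (g : nat -> R) (T : nat -> R) :
  sm (S p) (fun s => g s * prv T (p - s)%nat) = sm p (fun s => g s * T (p - S s)%nat).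
Proof.
  simpl. replace (p - p)%nat with O by lia. simpl. rewrite Rmult_0_r, Rplus_0_r.
  apply sm_ext. intros s Hs. replace (p - s)%nat with (S (p - S s)) by lia. reflexivity.
Qed.

Lemma Q_rec N : forall l, Q l (yH (S N)) = Q l (yH N) + / INR (S N) * prv (fun j => Q j (yH (S N))) l.
Proof.
  set (t := / INR (S N)).
  set (T := fun j => Q j (yH (S N))). set (Qo := fun j => Q j (yH N)).
  intros l. induction l as [l IH] using lt_wf_ind.
  change (T l = Qo l + t * prv T l).
  destruct l as [|p].
  - unfold T, Qo. rewrite !Q_0. simpl. ring.
  - assert (HS: INR (S p) <> 0) by (apply not_0_INR; lia).
    apply (Rmult_eq_reg_l (INR (S p))); auto.
    assert (N1 := newton_Q (S p) (yH (S N))).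
    assert (N2 := newton_Q p (yH (S N))).
    assert (N3 := newton_Q (S p) (yH N)).
    fold (T (S p)) in N1. fold (T p) in N2. fold (Qo (S p)) in N3.
    assert (E1: forall j, yH (S N) j = yH N j + t ^ j) by (intros; unfold yH, t; apply H_S).
    assert (IH': forall s, (s < S p)%nat -> Qo (S p - S s)%nat = T (p - s)%nat - t * prv T (p - s)%nat).
    { intros s Hs. specialize (IH (p - s)%nat ltac:(lia)). unfold T, Qo in *. simpl (S p - S s)%nat. rewrite IH. ring. }
    assert (K1: INR (S p) * Qo (S p) = sm (S p) (fun s => yH N (S s) * T (p - s)%nat) - t * sm p (fun s => yH N (S s) * T (p - S s)%nat)).
    { rewrite N3. rewrite <- (prv_sm p (fun s => yH N (S s)) T). rewrite <- sm_scal, <- sm_minus. apply sm_ext. intros s Hs.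
      change (Q (S p - S s) (yH N)) with (Qo (S p - S s)%nat). rewrite IH' by auto. ring. }
    assert (K2: INR (S p) * T (S p) = sm (S p) (fun s => yH N (S s) * T (p - s)%nat) + sm (S p) (fun s => t ^ (S s) * T (p - s)%nat)).
    { rewrite N1, <- sm_plus. apply sm_ext. intros s Hs. rewrite E1. simpl (S p - S s)%nat. unfold T. ring. }
    assert (K3: INR p * T p = sm p (fun s => yH N (S s) * T (p - S s)%nat) + sm p (fun s => t ^ (S s) * T (p - S s)%nat)).
    { rewrite N2, <- sm_plus. apply sm_ext. intros s Hs. rewrite E1. unfold T. ring. }
    assert (K4: sm (S p) (fun s => t ^ (S s) * T (p - s)%nat) = t * T p + t * sm p (fun s => t ^ (S s) * T (p - S s)%nat)).
    { rewrite sm_front, <- sm_scal. simpl pow. rewrite Nat.sub_0_r. f_equal; [ring|]. apply sm_ext. intros s Hs. simpl pow. ring. }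
    rewrite Rmult_plus_distr_l, K1, K2, K4. simpl prv. rewrite S_INR.
    assert (K3': sm p (fun s => t ^ (S s) * T (p - S s)%nat) = INR p * T p - sm p (fun s => yH N (S s) * T (p - S s)%nat)) by (rewrite K3; ring).
    rewrite K3'. ring.
Qed.

Lemma P_rec N : forall k, P k (yH (S N)) = P k (yH N) + / INR (S N) * prv (fun j => P j (yH N)) k.
Proof.
  set (t := / INR (S N)).
  set (T := fun j => P j (yH (S N))). set (Po := fun j => P j (yH N)).
  intros k. induction k as [k IH] using lt_wf_ind.
  change (T k = Po k + t * prv Po k).
  destruct k as [|p].
  - unfold T, Po. rewrite !P_0. simpl. ring.
  - assert (HS: INR (S p) <> 0) by (apply not_0_INR; lia).
    apply (Rmult_eq_reg_l (INR (S p))); auto.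
    assert (N1 := newton_P (S p) (yH (S N))).
    assert (N2 := newton_P p (yH N)).
    assert (N3 := newton_P (S p) (yH N)).
    assert (E1: forall j, yH (S N) j = yH N j + t ^ j) by (intros; unfold yH, t; apply H_S).
    set (g := fun s => (-1)^s * yH N (S s)).
    set (g2 := fun s => (-1)^s * t ^ (S s)).
    assert (L1: INR (S p) * T (S p) = sm (S p) (fun s => g s * Po (p - s)%nat) + t * sm (S p) (fun s => g s * prv Po (p - s)%nat)
             + sm (S p) (fun s => g2 s * Po (p - s)%nat) + t * sm (S p) (fun s => g2 s * prv Po (p - s)%nat)).
    { unfold T. rewrite N1. rewrite <- !sm_scal, <- !sm_plus. apply sm_ext. intros s Hs.
      simpl (S p - S s)%nat. rewrite (IH (p - s)%nat) by lia. fold t. unfold g, g2. rewrite E1.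
      change (fun j => P j (yH N)) with Po. unfold Po. ring. }
    rewrite L1. rewrite !prv_sm.
    assert (A1: sm (S p) (fun s => g s * Po (p - s)%nat) = INR (S p) * Po (S p)).
    { unfold Po. rewrite N3. apply sm_ext. intros s Hs. unfold g. simpl (S p - S s)%nat. ring. }
    assert (A2: sm p (fun s => g s * Po (p - S s)%nat) = INR p * Po p).
    { unfold Po. rewrite N2. apply sm_ext. intros s Hs. unfold g. ring. }
    assert (B1: sm (S p) (fun s => g2 s * Po (p - s)%nat) = t * Po p - t * sm p (fun s => g2 s * Po (p - S s)%nat)).
    { rewrite sm_front, <- sm_scal. rewrite Nat.sub_0_r.
      assert (E: sm p (fun i => g2 (S i) * Po (p - S i)%nat) = - sm p (fun s => t * (g2 s * Po (p - S s)%nat))).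
      { rewrite <- sm_opp. apply sm_ext. intros s Hs. unfold g2. simpl pow. ring. }
      rewrite E. unfold g2. simpl pow. ring. }
    rewrite A1, A2, B1. simpl prv. rewrite S_INR. ring.
Qed.

Fixpoint ph (m k : nat) : R := match m with
 | O => match k with O => 1 | _ => 0 end
 | S m' => INR (S m') * ph m' k + prv (ph m') k
 end.

Fixpoint ps (n m : nat) {struct m} : nat -> R :=
  match m with
  | O => fun l => match l with O => 1 | _ => 0 end
  | S m' => fix g (l : nat) : R := match l with
        | O => ps n m' O / INR (n + m')
        | S l' => (ps n m' (S l') + g l') / INR (n + m') end
  end.

Lemma ps_S n m l : ps n (S m) l = (ps n m l + prv (ps n (S m)) l) / INR (n + m).
Proof. destruct l; [|reflexivity]. simpl prv. rewrite Rplus_0_r. reflexivity. Qed.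

Lemma INR_pos n : (1 <= n)%nat -> 0 < INR n.
Proof. intros; apply lt_0_INR; lia. Qed.

Lemma ps_back n m l : (1 <= n)%nat -> INR (n + m) * ps n (S m) l - prv (ps n (S m)) l = ps n m l.
Proof. intros Hn. rewrite ps_S. assert (0 < INR (n+m)) by (apply INR_pos; lia). field. lra. Qed.

Lemma ps_front n m : forall l, (1 <= n)%nat -> INR n * ps n (S m) l - prv (ps n (S m)) l = ps (S n) m l.
Proof.
  induction m as [|m IHm]; intros l Hn.
  - replace (ps (S n) 0 l) with (ps n 0 l) by (destruct l; reflexivity). rewrite <- (ps_back n 0 l Hn). rewrite Nat.add_0_r. reflexivity.
  - assert (Hc: INR (n + S m) = INR (S n + m)) by (f_equal; lia).
    assert (Hcp: 0 < INR (n + S m)) by (apply INR_pos; lia).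
    set (A := ps n (S (S m))). set (B := ps n (S m)). set (Cc := ps (S n) (S m)). set (D := ps (S n) m).
    assert (eA: forall j, INR (n + S m) * A j = B j + prv A j).
    { intros j. unfold A, B. rewrite ps_S. field. lra. }
    assert (eC: forall j, INR (n + S m) * Cc j = D j + prv Cc j).
    { intros j. unfold Cc, D. rewrite Hc. rewrite ps_S. rewrite <- Hc. field. lra. }
    assert (IHm' : forall j, INR n * B j - prv B j = D j) by (intros; apply IHm; auto).
    change (INR n * A l - prv A l = Cc l).
    induction l as [|l IHl].
    + apply (Rmult_eq_reg_l (INR (n + S m))); [|lra].
      rewrite eC. simpl prv. rewrite <- (IHm' 0%nat). simpl prv.
      replace (INR (n + S m) * (INR n * A 0%nat - 0)) with (INR n * (INR (n + S m) * A 0%nat)) by ring.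
      rewrite eA. simpl prv. ring.
    + apply (Rmult_eq_reg_l (INR (n + S m))); [|lra].
      rewrite eC. simpl prv. rewrite <- IHl, <- (IHm' (S l)). simpl prv.
      replace (INR (n + S m) * (INR n * A (S l) - A l)) with (INR n * (INR (n + S m) * A (S l)) - INR (n + S m) * A l) by ring.
      rewrite !eA. simpl prv. ring.
Qed.

Lemma ps_tele n m l : (1 <= n)%nat -> ps n m l - ps (S n) m l = INR m * ps n (S m) l.
Proof.
  intros Hn. rewrite <- (ps_back n m l Hn), <- (ps_front n m l Hn). rewrite plus_INR. ring.
Qed.

Lemma ps_nonneg n m : forall l, (1 <= n)%nat -> 0 <= ps n m l.
Proof.
  induction m as [|m IHm]; intros l Hn.
  - destruct l; simpl; lra.
  - induction l as [|l IHl].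
    + rewrite ps_S. change (prv (ps n (S m)) 0) with 0. apply Rmult_le_pos.
      * specialize (IHm 0%nat Hn). lra.
      * left; apply Rinv_0_lt_compat; apply INR_pos; lia.
    + rewrite ps_S. change (prv (ps n (S m)) (S l)) with (ps n (S m) l). apply Rmult_le_pos.
      * specialize (IHm (S l) Hn). lra.
      * left; apply Rinv_0_lt_compat; apply INR_pos; lia.
Qed.

Lemma ps_1 n l : (1 <= n)%nat -> ps n 1 l = / INR n ^ (S l).
Proof.
  intros Hn. assert (0 < INR n) by (apply INR_pos; lia).
  induction l as [|l IHl].
  - simpl. rewrite Nat.add_0_r. field. lra.
  - rewrite ps_S. change (prv (ps n 1) (S l)) with (ps n 1 l). rewrite IHl. change (ps n 0 (S l)) with 0. rewrite Nat.add_0_r. simpl pow. field. repeat split; try lra; try (apply pow_nonzero; lra).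
Qed.

Lemma ps_decr n m l : (1 <= n)%nat -> ps (S n) m l <= ps n m l.
Proof.
  intros Hn. assert (E := ps_tele n m l Hn). assert (0 <= ps n (S m) l) by (apply ps_nonneg; auto).
  assert (0 <= INR m) by apply pos_INR. assert (0 <= INR m * ps n (S m) l) by (apply Rmult_le_pos; auto). lra.
Qed.

Lemma ps_le1 n m l : (1 <= n)%nat -> ps n m l <= ps 1 m l.
Proof.
  intros Hn. induction n as [|n IHn]; [lia|].
  destruct n; [lra|]. apply Rle_trans with (ps (S n) m l); [apply ps_decr; lia|]. apply IHn; lia.
Qed.

Lemma ps_bound n m l : (1 <= n)%nat -> ps n (S m) l <= sm (S l) (fun j => ps 1 m j) / INR n.
Proof.
  intros Hn. assert (0 < INR n) by (apply INR_pos; lia).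
  induction l as [|l IHl].
  - assert (E := ps_front n m 0 Hn). change (prv (ps n (S m)) 0) with 0 in E.
    assert (ps (S n) m 0 <= ps 1 m 0) by (apply ps_le1; lia).
    change (sm 1 (fun j => ps 1 m j)) with (0 + ps 1 m 0).
    apply (Rmult_le_reg_l (INR n)); auto.
    replace (INR n * ((0 + ps 1 m 0) / INR n)) with (ps 1 m 0) by (field; lra). lra.
  - assert (E := ps_front n m (S l) Hn). change (prv (ps n (S m)) (S l)) with (ps n (S m) l) in E.
    assert (ps (S n) m (S l) <= ps 1 m (S l)) by (apply ps_le1; lia).
    assert (K0: 0 <= sm (S l) (fun j => ps 1 m j)) by (apply sm_nonneg; intros; apply ps_nonneg; lia).
    assert (1 <= INR n) by (replace 1 with (INR 1) by reflexivity; apply le_INR; auto).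
    assert (Hi: / INR n <= 1) by (rewrite <- Rinv_1; apply Rinv_le_contravar; lra).
    assert (Hi0: 0 < / INR n) by (apply Rinv_0_lt_compat; lra).
    assert (ps n (S m) l <= sm (S l) (fun j => ps 1 m j)).
    { apply Rle_trans with (sm (S l) (fun j => ps 1 m j) / INR n); auto. unfold Rdiv. nra. }
    change (sm (S (S l)) (fun j => ps 1 m j)) with (sm (S l) (fun j => ps 1 m j) + ps 1 m (S l)).
    apply (Rmult_le_reg_l (INR n)); auto.
    replace (INR n * ((sm (S l) (fun j => ps 1 m j) + ps 1 m (S l)) / INR n)) with (sm (S l) (fun j => ps 1 m j) + ps 1 m (S l)) by (field; lra). lra.
Qed.

Lemma ph_S m k : ph (S m) k = INR (S m) * ph m k + prv (ph m) k.
Proof. reflexivity. Qed.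

Lemma ph_nonneg m k : 0 <= ph m k.
Proof.
  revert k; induction m; intros k; simpl.
  - destruct k; lra.
  - assert (0 <= prv (ph m) k) by (destruct k; simpl; auto; lra).
    assert (0 <= INR (S m) * ph m k) by (apply Rmult_le_pos; [apply pos_INR|auto]). simpl in *. lra.
Qed.

Lemma P_ph N k : P k (yH N) = ph N k / INR (fact N).
Proof.
  revert k. induction N as [|N IHN]; intros k.
  - destruct k as [|k].
    + rewrite P_0. simpl. field.
    + assert (E := newton_P (S k) (yH 0)).
      rewrite sm_zero in E. 2:{ intros t Ht. unfold yH. simpl. ring. }
      assert (INR (S k) <> 0) by (apply not_0_INR; lia).
      assert (HP: P (S k) (yH 0) = 0) by (apply (Rmult_eq_reg_l (INR (S k))); auto; lra).
      rewrite HP. simpl. field.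
  - rewrite P_rec, IHN. change (fact (S N)) with (S N * fact N)%nat. rewrite mult_INR.
    assert (INR (S N) <> 0) by (apply not_0_INR; lia). assert (INR (fact N) <> 0) by apply INR_fact_neq_0.
    destruct k as [|k]; rewrite ph_S; simpl prv.
    + field; auto.
    + rewrite IHN. field; auto.
Qed.

Lemma Q_ps N l : Q l (yH N) = INR (fact N) * ps 1 N l.
Proof.
  revert l. induction N as [|N IHN]; intros l.
  - destruct l as [|l].
    + rewrite Q_0. simpl. ring.
    + assert (E := newton_Q (S l) (yH 0)).
      rewrite sm_zero in E. 2:{ intros t Ht. unfold yH. simpl. ring. }
      assert (INR (S l) <> 0) by (apply not_0_INR; lia).
      assert (HP: Q (S l) (yH 0) = 0) by (apply (Rmult_eq_reg_l (INR (S l))); auto; lra).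
      rewrite HP. simpl. ring.
  - change (fact (S N)) with (S N * fact N)%nat. rewrite mult_INR.
    assert (INR (S N) <> 0) by (apply not_0_INR; lia). assert (INR (fact N) <> 0) by apply INR_fact_neq_0.
    induction l as [|l IHl].
    + rewrite Q_rec, IHN. rewrite ps_S. change (prv (ps 1 (S N)) 0) with 0.
      change (prv (fun j => Q j (yH (S N))) 0) with 0. replace (1 + N)%nat with (S N) by lia. field; auto.
    + rewrite Q_rec, IHN. change (prv (fun j => Q j (yH (S N))) (S l)) with (Q l (yH (S N))). rewrite IHl. rewrite (ps_S 1 N (S l)).
      change (prv (ps 1 (S N)) (S l)) with (ps 1 (S N) l).
      replace (1 + N)%nat with (S N) by lia. field; auto.
Qed.

Lemma lim_le u l B : Un_cv u l -> (forall n, u n <= B) -> l <= B.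
Proof.
  intros Hu Hb. destruct (Rle_or_lt l B) as [|Hlt]; auto.
  destruct (Hu (l - B)) as [N HN]; [lra|]. specialize (HN N (le_n N)). specialize (Hb N).
  unfold R_dist in HN. apply Rabs_def2 in HN. lra.
Qed.

Lemma lim_ge u l B : Un_cv u l -> (forall n, B <= u n) -> B <= l.
Proof.
  intros Hu Hb. destruct (Rle_or_lt B l) as [|Hlt]; auto.
  destruct (Hu (B - l)) as [N HN]; [lra|]. specialize (HN N (le_n N)). specialize (Hb N).
  unfold R_dist in HN. apply Rabs_def2 in HN. lra.
Qed.

Lemma cv_const c : Un_cv (fun _ => c) c.
Proof. intros e He. exists O. intros. unfold R_dist. rewrite Rminus_diag, Rabs_R0. lra. Qed.

Lemma cv_scal u l c : Un_cv u l -> Un_cv (fun n => c * u n) (c * l).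
Proof. intros. apply CV_mult; auto. apply cv_const. Qed.

Lemma cv_ext u v l : (forall n, u n = v n) -> Un_cv u l -> Un_cv v l.
Proof. intros E Hu e He. destruct (Hu e He) as [N HN]. exists N. intros. rewrite <- E. auto. Qed.

Lemma cv_sm_fin n (u : nat -> nat -> R) (l : nat -> R) :
  (forall i, (i < n)%nat -> Un_cv (u i) (l i)) -> Un_cv (fun K => sm n (fun i => u i K)) (sm n l).
Proof.
  induction n; intros Hc; simpl.
  - apply cv_const.
  - apply CV_plus; auto.
Qed.

Lemma cv_inv0 : Un_cv (fun n => / INR (S n)) 0.
Proof.
  intros e He. destruct (INR_archimed e 1 He) as [N HN]. exists N. intros n Hn.
  unfold R_dist. rewrite Rminus_0_r. assert (0 < INR (S n)) by (apply lt_0_INR; lia).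
  rewrite Rabs_right by (left; apply Rinv_0_lt_compat; auto).
  assert (INR N <= INR (S n)) by (apply le_INR; lia).
  apply (Rmult_lt_reg_l (INR (S n))); auto. rewrite Rinv_r by lra. nra.
Qed.

Lemma cv_squeeze0 u v : (forall n, 0 <= u n <= v n) -> Un_cv v 0 -> Un_cv u 0.
Proof.
  intros Hb Hv e He. destruct (Hv e He) as [N HN]. exists N. intros n Hn. specialize (HN n Hn). specialize (Hb n).
  unfold R_dist in *. rewrite Rminus_0_r in *. rewrite Rabs_right in * by lra. lra.
Qed.

Lemma ln_le_lin u : 0 < u -> ln (1 + u) <= u.
Proof.
  intros Hu. destruct (Rle_or_lt (ln (1+u)) u) as [|Hlt]; auto.
  assert (H2: ln (exp u) < ln (1+u)) by (rewrite ln_exp; auto).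
  apply ln_lt_inv in H2; [| apply exp_pos | lra].
  assert (Hx := exp_ineq1_le u). lra.
Qed.

Lemma harm_ln a K : 0 < a -> ln (a + INR K) - ln a <= sm K (fun j => / (a + INR j)).
Proof.
  intros Ha. induction K as [|K IH].
  - simpl. rewrite Rplus_0_r. lra.
  - simpl sm. rewrite S_INR.
    assert (0 < a + INR K) by (assert (0 <= INR K) by apply pos_INR; lra).
    assert (E: a + (INR K + 1) = (a + INR K) * (1 + / (a + INR K))) by (field; lra).
    rewrite E, ln_mult; [| lra | assert (0 < / (a + INR K)) by (apply Rinv_0_lt_compat; lra); lra].
    assert (ln (1 + / (a + INR K)) <= / (a + INR K)) by (apply ln_le_lin; apply Rinv_0_lt_compat; lra).
    lra.
Qed.

Lemma harm_unbounded a B : 0 < a -> exists K, B < sm K (fun j => / (a + INR j)).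
Proof.
  intros Ha. destruct (INR_archimed 1 (exp (B + ln a)) ltac:(lra)) as [K HK].
  exists K. assert (H1 := harm_ln a K Ha).
  assert (0 <= INR K) by apply pos_INR.
  assert (H2: ln (exp (B + ln a)) < ln (a + INR K)) by (apply ln_increasing; [apply exp_pos|lra]).
  rewrite ln_exp in H2. lra.
Qed.

Lemma growing_bounded_cv u B : Un_growing u -> (forall n, u n <= B) -> exists L, Un_cv u L.
Proof.
  intros Hg Hb. assert (Hub: has_ub u). { exists B. intros x [i ->]. auto. }
  destruct (growing_cv u Hg Hub) as [L HL]. exists L; auto.
Qed.

Lemma col_gen (V V1 V2 c : nat -> R) (n a A1 A2 : R) :
  0 < n -> 0 < a ->
  (forall M, 0 <= V M) -> (forall M, 0 <= V1 M) -> (forall M, 0 <= V2 M) -> (forall M, 0 <= c M) ->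
  (forall M, c M <= (a + INR M) * V M) ->
  (forall M, n * V M = c M - c (S M) + V1 M + V2 M) ->
  Un_cv (fun K => sm (S K) V1) A1 -> Un_cv (fun K => sm (S K) V2) A2 ->
  Un_cv (fun K => sm (S K) V) ((c O + A1 + A2) / n).
Proof.
  intros Hn Ha HV HV1 HV2 Hc Hca Heq HA1 HA2.
  assert (Eq: forall K, n * sm (S K) V = c O - c (S K) + sm (S K) V1 + sm (S K) V2).
  { intros K. rewrite <- sm_scal. rewrite (sm_ext _ _ (fun M => (c M - c (S M)) + (V1 M + V2 M))) by (intros; rewrite Heq; ring).
    rewrite sm_plus, sm_plus, sm_tele. ring. }
  assert (B1: forall K, sm (S K) V1 <= A1) by (intros; apply (growing_ineq _ _ (sm_growing V1 HV1) HA1)).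
  assert (B2: forall K, sm (S K) V2 <= A2) by (intros; apply (growing_ineq _ _ (sm_growing V2 HV2) HA2)).
  assert (BS: forall K, sm (S K) V <= (c O + A1 + A2) / n).
  { intros K. apply (Rmult_le_reg_l n); auto. replace (n * ((c O + A1 + A2) / n)) with (c O + A1 + A2) by (field; lra).
    rewrite Eq. specialize (B1 K). specialize (B2 K). specialize (Hc (S K)). lra. }
  destruct (growing_bounded_cv _ _ (sm_growing V HV) BS) as [L HL].
  set (g := c O + A1 + A2 - n * L).
  assert (Hcg: Un_cv (fun K => c (S K)) g).
  { apply cv_ext with (fun K => c O + sm (S K) V1 + sm (S K) V2 - n * sm (S K) V).
    - intros K. rewrite Eq. ring.
    - unfold g. apply CV_minus; [apply CV_plus; [apply CV_plus; [apply cv_const|auto]|auto]|]. apply cv_scal; auto. }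
  assert (g0: 0 <= g) by (apply (lim_ge _ _ _ Hcg); intros; apply Hc).
  assert (gz: g = 0).
  { destruct g0 as [gp|]; auto. exfalso.
    destruct (Hcg (g/2)) as [M0 HM0]; [lra|].
    assert (HL' := growing_ineq _ _ (sm_growing V HV) HL).
    set (a' := a + INR (S (S M0))).
    assert (Ha' : 0 < a') by (unfold a'; assert (0 <= INR (S (S M0))) by apply pos_INR; lra).
    destruct (harm_unbounded a' ((L + 1) / (g/2)) Ha') as [J HJ].
    assert (Hlow: forall j, (g / 2) * / (a' + INR j) <= V (S (S M0) + j)%nat).
    { intros j. specialize (HM0 (S M0 + j)%nat ltac:(lia)). unfold R_dist in HM0. apply Rabs_def2 in HM0.
      specialize (Hca (S (S M0) + j)%nat). replace (S (S M0 + j)) with (S (S M0) + j)%nat in HM0 by lia.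
      assert (E: a + INR (S (S M0) + j) = a' + INR j) by (unfold a'; rewrite plus_INR; ring).
      rewrite E in Hca.
      assert (0 < a' + INR j) by (assert (0 <= INR j) by apply pos_INR; lra).
      apply (Rmult_le_reg_l (a' + INR j)); auto. replace ((a' + INR j) * (g / 2 * / (a' + INR j))) with (g/2) by (field; lra).
      lra. }
    assert (Hsum: (g/2) * sm J (fun j => / (a' + INR j)) <= sm (S (S M0) + J) V).
    { rewrite sm_split. rewrite <- sm_scal. assert (0 <= sm (S (S M0)) V) by (apply sm_nonneg; auto).
      assert (sm J (fun j => g / 2 * / (a' + INR j)) <= sm J (fun j => V (S (S M0) + j)%nat)) by (apply sm_le; intros; auto).
      lra. }
    specialize (HL' (S M0 + J)%nat). cbv beta in HL'. replace (S (S M0 + J)) with (S (S M0) + J)%nat in HL' by lia.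
    assert ((L + 1) < (g/2) * sm J (fun j => / (a' + INR j))).
    { apply (Rmult_lt_compat_l (g/2)) in HJ; [|lra]. replace (g / 2 * ((L + 1) / (g / 2))) with (L + 1) in HJ by (field; lra). lra. }
    lra. }
  replace ((c O + A1 + A2) / n) with L; auto.
  unfold g in gz. apply (Rmult_eq_reg_l n); [|lra]. field_simplify; lra.
Qed.

Definition Vc (N k l M : nat) : R := ph M k * ps (S N) (S (S M)) l.
Definition cc (N k l M : nat) : R := ph M k * ps (S N) (S M) l.

Lemma col_id N k l M : INR (S N) * Vc N k l M =
  cc N k l M - cc N k l (S M) + prv (fun k' => Vc N k' l M) k + prv (fun l' => Vc N k l' M) l.
Proof.
  unfold cc, Vc. rewrite ph_S. rewrite <- (ps_back (S N) (S M) l) by lia.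
  set (A := ps (S N) (S (S M))).
  assert (E1: prv (fun l' => ph M k * A l') l = ph M k * prv A l) by (destruct l; simpl; ring).
  assert (E2: prv (fun k' => ph M k' * A l) k = prv (ph M) k * A l) by (destruct k; simpl; ring).
  rewrite E1, E2. rewrite plus_INR. ring.
Qed.

Lemma Vc_nonneg N k l M : 0 <= Vc N k l M.
Proof. unfold Vc. apply Rmult_le_pos; [apply ph_nonneg|apply ps_nonneg; lia]. Qed.
Lemma cc_nonneg N k l M : 0 <= cc N k l M.
Proof. unfold cc. apply Rmult_le_pos; [apply ph_nonneg|apply ps_nonneg; lia]. Qed.

Lemma cc_le N k l M : cc N k l M <= (INR (S N) + 1 + INR M) * Vc N k l M.
Proof.
  unfold cc, Vc. rewrite <- (ps_back (S N) (S M) l) by lia.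
  assert (0 <= prv (ps (S N) (S (S M))) l) by (destruct l; cbn [prv]; [lra|apply ps_nonneg; lia]).
  assert (0 <= ph M k) by apply ph_nonneg.
  replace (INR (S N + S M)) with (INR (S N) + 1 + INR M) by (rewrite plus_INR, (S_INR M); ring).
  assert (0 <= ph M k * prv (ps (S N) (S (S M))) l) by (apply Rmult_le_pos; auto).
  lra.
Qed.

Lemma cv_zero : Un_cv (fun K => sm (S K) (fun _ => 0)) 0.
Proof. apply cv_ext with (fun _ => 0); [intros; rewrite sm_zero; auto|apply cv_const]. Qed.

Lemma col_step N k l A1 A2 :
  Un_cv (fun K => sm (S K) (fun M => prv (fun k' => Vc N k' l M) k)) A1 ->
  Un_cv (fun K => sm (S K) (fun M => prv (fun l' => Vc N k l' M) l)) A2 ->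
  Un_cv (fun K => sm (S K) (Vc N k l)) ((cc N k l O + A1 + A2) / INR (S N)).
Proof.
  intros H1 H2. apply (col_gen (Vc N k l) (fun M => prv (fun k' => Vc N k' l M) k) (fun M => prv (fun l' => Vc N k l' M) l) (cc N k l) (INR (S N)) (INR (S N) + 1)); auto.
  - apply lt_0_INR; lia.
  - assert (0 < INR (S N)) by (apply lt_0_INR; lia). lra.
  - intros; apply Vc_nonneg.
  - intros; destruct k; cbn [prv]; [lra|apply Vc_nonneg].
  - intros; destruct l; cbn [prv]; [lra|apply Vc_nonneg].
  - intros; apply cc_nonneg.
  - intros; apply cc_le.
  - intros; apply col_id.
Qed.

Lemma C_n0 n : C n 0 = 1.
Proof. unfold C. rewrite Nat.sub_0_r. simpl. field. apply INR_fact_neq_0. Qed.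
Lemma C_nn n : C n n = 1.
Proof. unfold C. rewrite Nat.sub_diag. simpl. field. apply INR_fact_neq_0. Qed.

Lemma cv_val u a b : a = b -> Un_cv u a -> Un_cv u b.
Proof. intros ->; auto. Qed.

Lemma col N : forall k l, Un_cv (fun K => sm (S K) (Vc N k l)) (C (k + l + 1) l / INR (S N) ^ (k + l + 2)).
Proof.
  assert (Hn: 0 < INR (S N)) by (apply lt_0_INR; lia).
  set (n := INR (S N)) in *.
  intros k. induction k as [|k IHk]; intros l; induction l as [|l IHl].
  - eapply cv_val; [|apply col_step; [apply cv_zero|apply cv_zero]].
    unfold cc. simpl ph. rewrite ps_1 by lia. fold n. simpl. rewrite C_n0. field. lra.
  - eapply cv_val; [|apply col_step; [apply cv_zero|apply IHl]].
    unfold cc. simpl ph. rewrite ps_1 by lia. fold n.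
    replace (0 + S l + 1)%nat with (S (l + 1)) by lia. rewrite <- pascal by lia.
    replace (l + 1)%nat with (S l) by lia. rewrite C_nn.
    replace (0 + S l + 2)%nat with (S (S (S l))) by lia. replace (0 + l + 2)%nat with (S (S l)) by lia.
    replace (0 + l + 1)%nat with (S l) by lia.
    simpl pow. fold n. field. repeat split; try (apply pow_nonzero); lra.
  - eapply cv_val; [|apply col_step; [apply (IHk 0%nat)|apply cv_zero]].
    unfold cc. simpl ph. rewrite !C_n0.
    replace (S k + 0 + 2)%nat with (S (k + 0 + 2)) by lia. simpl pow. fold n. field. repeat split; try (apply pow_nonzero); lra.
  - eapply cv_val; [|apply col_step; [apply (IHk (S l))|apply IHl]].
    unfold cc. simpl ph.
    replace (S k + S l + 1)%nat with (S (k + l + 2)) by lia.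
    replace (k + S l + 1)%nat with (k + l + 2)%nat by lia.
    replace (S k + l + 1)%nat with (k + l + 2)%nat by lia.
    rewrite <- (pascal (k + l + 2) l) by lia.
    replace (S k + S l + 2)%nat with (S (S (k + l + 2))) by lia.
    replace (k + S l + 2)%nat with (S (k + l + 2)) by lia.
    replace (S k + l + 2)%nat with (S (k + l + 2)) by lia.
    simpl pow. fold n. field. repeat split; try (apply pow_nonzero); lra.
Qed.

Lemma row k l M : Un_cv (fun K => sm (S K) (fun N => Vc N k l M)) (ph M k * ps 1 (S M) l / INR (S M)).
Proof.
  assert (HM: 0 < INR (S M)) by (apply lt_0_INR; lia).
  set (f := fun N => ps (S N) (S M) l).
  assert (E: forall K, sm (S K) (fun N => Vc N k l M) = ph M k / INR (S M) * (f O - f (S K))).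
  { intros K. rewrite <- sm_tele, <- sm_scal. apply sm_ext. intros N HN. unfold f, Vc.
    rewrite ps_tele by lia. field. lra. }
  apply cv_ext with (fun K => ph M k / INR (S M) * (f O - f (S K))); [intros; rewrite E; auto|].
  replace (ph M k * ps 1 (S M) l / INR (S M)) with (ph M k / INR (S M) * (f O - 0)) by (unfold f; field; lra).
  apply cv_scal. apply CV_minus; [apply cv_const|].
  set (Kc := sm (S l) (fun j => ps 1 M j)).
  apply cv_squeeze0 with (fun K => Kc * / INR (S K)).
  - intros K. unfold f. split; [apply ps_nonneg; lia|].
    apply Rle_trans with (Kc / INR (S (S K))); [apply ps_bound; lia|].
    assert (0 <= Kc) by (apply sm_nonneg; intros; apply ps_nonneg; lia).
    unfold Rdiv. apply Rmult_le_compat_l; auto. apply Rinv_le_contravar; [apply lt_0_INR; lia|apply le_INR; lia].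
  - replace 0 with (Kc * 0) by ring. apply cv_scal. apply cv_inv0.
Qed.

Lemma half (V : nat -> nat -> R) (r c : nat -> R) (B : R) :
  (forall M N, 0 <= V M N) ->
  (forall M, Un_cv (fun J => sm (S J) (V M)) (r M)) ->
  (forall N, Un_cv (fun K => sm (S K) (fun M => V M N)) (c N)) ->
  (forall J, sm (S J) c <= B) -> forall K, sm (S K) r <= B.
Proof.
  intros HV Hr Hc HB K.
  apply (lim_le (fun J => sm (S K) (fun M => sm (S J) (V M)))).
  - apply (cv_sm_fin (S K) (fun M J => sm (S J) (V M))). intros; auto.
  - intros J. change (sm (S K) (fun M => sm (S J) (V M))) with (sm (S K) (fun M => sm (S J) (fun N => V M N))).
    rewrite sm_swap. apply Rle_trans with (sm (S J) c); auto.
    apply sm_le. intros N HN. apply (growing_ineq _ _ (sm_growing _ (fun M => HV M N)) (Hc N)).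
Qed.

Lemma tonelli (V : nat -> nat -> R) (r c : nat -> R) (T : R) :
  (forall M N, 0 <= V M N) ->
  (forall M, Un_cv (fun J => sm (S J) (V M)) (r M)) ->
  (forall N, Un_cv (fun K => sm (S K) (fun M => V M N)) (c N)) ->
  Un_cv (fun K => sm (S K) c) T -> Un_cv (fun K => sm (S K) r) T.
Proof.
  intros HV Hr Hc HT.
  assert (rpos: forall M, 0 <= r M).
  { intros M. apply (lim_ge _ _ _ (Hr M)). intros; apply sm_nonneg; auto. }
  assert (cpos: forall N, 0 <= c N).
  { intros N. apply (lim_ge _ _ _ (Hc N)). intros; apply sm_nonneg; auto. }
  assert (HcT: forall J, sm (S J) c <= T) by (intros; apply (growing_ineq _ _ (sm_growing c cpos) HT)).
  assert (HrT := half V r c T HV Hr Hc HcT).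
  destruct (growing_bounded_cv _ _ (sm_growing r rpos) HrT) as [L HL].
  assert (HrL: forall K, sm (S K) r <= L) by (intros; apply (growing_ineq _ _ (sm_growing r rpos) HL)).
  assert (HcL := half (fun N M => V M N) c r L (fun N M => HV M N) Hc Hr HrL).
  assert (L <= T) by (apply (lim_le _ _ _ HL); auto).
  assert (T <= L) by (apply (lim_le _ _ _ HT); auto).
  replace T with L by lra. auto.
Qed.

Lemma sum_f_sm f n : sum_f_R0 f n = sm (S n) f.
Proof. induction n; simpl; [ring|]. rewrite IHn. simpl. ring. Qed.

Lemma inf_sum_cv f l : infinite_sum f l <-> Un_cv (fun K => sm (S K) f) l.
Proof.
  unfold infinite_sum, Un_cv. split; intros Hf e He; destruct (Hf e He) as [N HN]; exists N; intros n Hn;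
  specialize (HN n Hn); rewrite sum_f_sm in *; auto.
Qed.

Lemma inv_sq_bound K : sm (S K) (fun j => / INR (S j) ^ 2) <= 2 - / INR (S K).
Proof.
  induction K as [|K IH].
  - simpl. lra.
  - change (sm (S (S K)) (fun j => / INR (S j) ^ 2)) with (sm (S K) (fun j => / INR (S j) ^ 2) + / INR (S (S K)) ^ 2).
    assert (Hx: 1 <= INR (S K)) by (replace 1 with (INR 1) by reflexivity; apply le_INR; lia).
    rewrite (S_INR (S K)). set (x := INR (S K)) in *.
    assert (E: / x - / (x + 1) - / (x + 1) ^ 2 = / (x * (x+1)^2)) by (field; lra).
    assert (0 < / (x * (x+1)^2)) by (apply Rinv_0_lt_compat; apply Rmult_lt_0_compat; [lra|]; apply pow_lt; lra).
    lra.
Qed.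

Lemma zeta_cv w : (2 <= w)%nat -> infinite_sum (fun j => / INR (S j) ^ w) (zeta w).
Proof.
  intros Hw. unfold zeta. apply epsilon_spec.
  assert (Hle: forall j, / INR (S j) ^ w <= / INR (S j) ^ 2).
  { intros j. assert (Hx: 1 <= INR (S j)) by (replace 1 with (INR 1) by reflexivity; apply le_INR; lia).
    apply Rinv_le_contravar; [apply pow_lt; lra|]. apply Rle_pow; auto. }
  assert (Hpos: forall j, 0 <= / INR (S j) ^ w).
  { intros j. left. apply Rinv_0_lt_compat. apply pow_lt. apply lt_0_INR; lia. }
  assert (HB: forall K, sm (S K) (fun j => / INR (S j) ^ w) <= 2).
  { intros K. apply Rle_trans with (sm (S K) (fun j => / INR (S j) ^ 2)); [apply sm_le; intros; auto|].
    assert (H1 := inv_sq_bound K). assert (0 < / INR (S K)) by (apply Rinv_0_lt_compat; apply lt_0_INR; lia). lra. }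
  destruct (growing_bounded_cv _ _ (sm_growing _ Hpos) HB) as [L HL].
  exists L. apply inf_sum_cv. auto.
Qed.

Theorem theorem4 (k l : nat) :
  infinite_sum
    (fun n => Q l (fun i => H i (S n)) * P k (fun i => H i n) / (INR (S n)) ^ 2)
    (C (l + k + 1) l * zeta (l + k + 2)).
Proof.
  apply inf_sum_cv.
  apply cv_ext with (fun K => sm (S K) (fun M => ph M k * ps 1 (S M) l / INR (S M))).
  { intros K. apply sm_ext. intros n Hn.
    change (fun i => H i (S n)) with (yH (S n)). change (fun i => H i n) with (yH n).
    rewrite Q_ps, P_ph. change (fact (S n)) with (S n * fact n)%nat. rewrite mult_INR.
    assert (INR (S n) <> 0) by (apply not_0_INR; lia). assert (INR (fact n) <> 0) by apply INR_fact_neq_0.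
    field. auto. }
  apply (tonelli (fun M N => Vc N k l M) _ (fun N => C (k + l + 1) l / INR (S N) ^ (k + l + 2))).
  - intros; apply Vc_nonneg.
  - intros M. apply row.
  - intros N. apply col.
  - replace (k + l)%nat with (l + k)%nat by lia.
    apply cv_ext with (fun K => C (l + k + 1) l * sm (S K) (fun j => / INR (S j) ^ (l + k + 2))).
    { intros K. rewrite <- sm_scal. apply sm_ext. intros. unfold Rdiv. ring. }
    apply cv_scal. apply inf_sum_cv. apply zeta_cv. lia.
Qed.
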